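(* Let $\mathcal N=(\mathcal S,\mathcal C,\mathcal R)$ be a chemical reaction network, $k\in\mathbb R^r_{>0}$, and $\mathcal M=(\mathcal S,\mathcal C,\mathcal R,k)$ the associated mass action system. Let $\tilde{\mathcal N}=(\mathcal S,\tilde{\mathcal C},\mathcal{CR}_K,\tilde{\mathcal R})$ be an improper translation of $\mathcal N$ which is strongly resolvable and has structural deficiency $\tilde\delta=0$, and let $\tilde{\mathcal M}=(\mathcal S,\tilde{\mathcal C},\mathcal{CR}_K,\tilde{\mathcal R},\tilde k)$ be the improperly translated mass action system. Then the (positive) steady states of the system governing $\tilde{\mathcal M}$ coincide with those of the system governing $\mathcal M$.
   Context: A chemical reaction network $\mathcal N=(\mathcal S,\mathcal C,\mathcal R)$ consists of species $\mathcal A_1,\dots,\mathcal A_m$, pairwise distinct complexes $\mathcal C_1,\dots,\mathcal C_n$ with stoichiometric vectors $y_1,\dots,y_n\in\mathbb Z^m_{\ge 0}$, and reactions $\mathcal R_1,\dots,\mathcal R_r$, where $\mathcal R_i$ is $\mathcal C_{\rho(i)}\to\mathcal C_{\rho'(i)}$ with $\rho(i)\neq\rho'(i)$; every species appears in some complex and every complex in some reaction. Complexes and reactions are identified with their indices; $\mathcal{CR}=\{\rho(i)\}$ is the reactant complex set; $\mathbf x^{y}=\prod_j x_j^{y_j}$. The mass action system $\mathcal M=(\mathcal S,\mathcal C,\mathcal R,k)$ is $\dot{\mathbf x}=\sum_{i}k_i(y_{\rho'(i)}-y_{\rho(i)})\mathbf x^{y_{\rho(i)}}$ on $\mathbb R^m_{>0}$;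 steady states are taken in $\mathbb R^m_{>0}$. Linkage classes are connected components of the underlying undirected reaction graph; weakly reversible means every reaction $\mathcal C_a\to\mathcal C_b$ admits a directed path from $\mathcal C_b$ back to $\mathcal C_a$. A translation $\tilde{\mathcal N}=(\mathcal S,\tilde{\mathcal C},\mathcal{CR}_K,\tilde{\mathcal R})$ of $\mathcal N$: $(\mathcal S,\tilde{\mathcal C},\tilde{\mathcal R})$ is a chemical reaction network with complexes $\tilde{\mathcal C}_1,\dots,\tilde{\mathcal C}_{\tilde n}$ (vectors $\tilde y_j$), reactions $\tilde{\mathcal R}_l:\tilde{\mathcal C}_{\tilde\rho(l)}\to\tilde{\mathcal C}_{\tilde\rho'(l)}$, reactant complex set $\tilde{\mathcal{CR}}$, and $\mathcal{CR}_K\subseteq\mathcal{CR}$, such that (1) there is a bijection $h_1:\mathcal R\to\tilde{\mathcal R}$ preserving reaction vectors: $\tilde y_{\tilde\rho'(h_1(i))}-\tilde y_{\tilde\rho(h_1(i))}=y_{\rho'(i)}-y_{\rho(i)}$; (2) there is a surjection $h_2:\mathcal{CR}\to\tilde{\mathcal{CR}}$ with $h_2(\rho(i))=\tilde\rho(h_1(i))$; (3) for each $j\in\tilde{\mathcal{CR}}$, $\mathcal{CR}_K$ contains exactly one element $\kappa(j)$ of $h_2^{-1}(j)$, the kinetic complex of $\tilde{\mathcal C}_j$ (non-reactant complexes get arbitrary kinetic complexes in $\mathcal{CR}_K$). It is improper if $h_2$ is not injective, strong if $\tilde{\mathcal N}$ is weakly reversible. Kinetic-order subspace: $\tilde S=\mathrm{span}\{y_{\kappa(\tilde\rho'(l))}-y_{\kappa(\tilde\rho(l))}\}$.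 Structural deficiency: $\tilde\delta=\dim(\ker\tilde Y\cap\mathrm{Im}\,\tilde I_a)$, where $\tilde Y$ has columns $\tilde y_j$ and $\tilde I_a\in\mathbb Z^{\tilde n\times r}$ has, in the column of reaction $\tilde{\mathcal R}_l$, entry $-1$ in row $\tilde\rho(l)$, $+1$ in row $\tilde\rho'(l)$, and $0$ elsewhere. Improper reactions: $\mathcal R_I=\{i:\rho(i)\in\mathcal{CR}\setminus\mathcal{CR}_K\}$; $\rho(i)_K$ is the unique element of $h_2^{-1}(h_2(\rho(i)))\cap\mathcal{CR}_K$. $\tilde S_I=\mathrm{span}\{y_{\rho(i)}-y_{\rho(i)_K}:i\in\mathcal R_I\}$. Weakly resolvable: $\tilde{\mathcal N}$ strong and $\tilde S_I\subseteq\tilde S$. In that case fix a basis $\{y_{p_j}-y_{q_j}\}_{j=1}^{\tilde s}$ of $\tilde S$ with $p_j,q_j\in\mathcal{CR}_K$ and $h_2(p_j),h_2(q_j)$ in the same linkage class of $\tilde{\mathcal N}$, and for $i\in\mathcal R_I$ let $c^{(i)}_j$ be the coordinates: $y_{\rho(i)}-y_{\rho(i)_K}=\sum_j c^{(i)}_j(y_{p_j}-y_{q_j})$. Tree constants: for a weakly reversible directed graph with edge weights, a spanning $a$-tree is a subgraph spanning the linkage class of vertex $a$, with no cycles, and with $a$ as unique sink; the tree constant of $a$ is the sum over spanning $a$-trees of the product of their edge weights. The semi-proper reaction graph of $\tilde{\mathcal N}$ is its reaction graph with edge $h_1(i)$ weighted $k_i$ if $i\notin\mathcal R_I$ and by an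 indeterminate positive $\tilde k_i$ if $i\in\mathcal R_I$; let $\tilde K_a$ be its tree constants (polynomials in these weights). The strong kinetic adjustment factor of $i\in\mathcal R_I$ is $\tilde K_{\rho(i),\rho(i)_K}=\prod_j(\tilde K_{h_2(p_j)}/\tilde K_{h_2(q_j)})^{c^{(i)}_j}$. $\tilde{\mathcal N}$ is strongly resolvable if it is weakly resolvable and, for every $i\in\mathcal R_I$, $\tilde K_{\rho(i),\rho(i)_K}$ does not depend on any $\tilde k_{j}$, $j\in\mathcal R_I$. The improperly translated mass action system $\tilde{\mathcal M}$ is the generalized mass action system $\dot{\mathbf x}=\sum_l\tilde k_l(\tilde y_{\tilde\rho'(l)}-\tilde y_{\tilde\rho(l)})\mathbf x^{y_{\kappa(\tilde\rho(l))}}$ with rate constants $\tilde k_{h_1(i)}=k_i$ for $i\notin\mathcal R_I$ and $\tilde k_{h_1(i)}=\tilde K_{\rho(i),\rho(i)_K}\,k_i$ for $i\in\mathcal R_I$. *)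

(* Defs.v *)
From HB Require Import structures.
From mathcomp Require Import all_boot all_order all_algebra.
From mathcomp Require Import reals exp.
Set Implicit Arguments. Unset Strict Implicit. Unset Printing Implicit Defensive.
Import Order.TTheory GRing.Theory Num.Theory.
Local Open Scope ring_scope.

Record crn (m : nat) := CRN {
  n_cx : nat;
  n_rx : nat;
  cplx : 'I_n_cx -> 'I_m -> nat;
  src : 'I_n_rx -> 'I_n_cx;
  tgt : 'I_n_rx -> 'I_n_cx }.
Arguments n_cx {m}. Arguments n_rx {m}. Arguments cplx {m}.
Arguments src {m}. Arguments tgt {m}.

Definition is_crn m (N : crn m) : Prop :=
  [/\ (forall i, src N i != tgt N i),
      injective (cplx N),
      (forall s : 'I_m, exists c, cplx N c s != 0%N) &
      (forall c, exists i, src N i = c \/ tgt N i = c)].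

Definition reactants m (N : crn m) : {set 'I_(n_cx N)} := [set src N i | i in 'I_(n_rx N)].

Arguments reactants {m} N.

Definition ulink m (N : crn m) : rel 'I_(n_cx N) := fun u v =>
  [exists l, ((src N l == u) && (tgt N l == v)) || ((src N l == v) && (tgt N l == u))].
Arguments ulink {m} N.
Definition linked m (N : crn m) (u v : 'I_(n_cx N)) : bool := connect (ulink N) u v.
Definition dlink m (N : crn m) : rel 'I_(n_cx N) := fun u v =>
  [exists l, (src N l == u) && (tgt N l == v)].
Arguments dlink {m} N.
Definition weakly_reversible m (N : crn m) : Prop :=
  forall l, connect (dlink N) (tgt N l) (src N l).

(* spanning a-tree (edge set E), written as an in-arborescence rooted at a:
   edges lie in the linkage class of a, a is the unique sink (no out-edge at a,
   exactly one out-edge at every other vertex of the class), and every vertex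
   of the class reaches a along E (no cycles). *)
Definition Erel m (N : crn m) (E : {set 'I_(n_rx N)}) : rel 'I_(n_cx N) := fun u v =>
  [exists l in E, (src N l == u) && (tgt N l == v)].
Definition is_tree m (N : crn m) (a : 'I_(n_cx N)) (E : {set 'I_(n_rx N)}) : bool :=
  [&& [forall l in E, linked (src N l) a && (src N l != a)],
      [forall v, (linked v a && (v != a)) ==> (#|[set l in E | src N l == v]| == 1%N)] &
      [forall v, linked v a ==> connect (Erel E) v a]].

Record translation m (N : crn m) := Translation {
  tN : crn m;
  h1 : 'I_(n_rx N) -> 'I_(n_rx tN);
  h2 : 'I_(n_cx N) -> 'I_(n_cx tN);
  CRK : {set 'I_(n_cx N)};
  kappa : 'I_(n_cx tN) -> 'I_(n_cx N) }.
Arguments tN {m N}. Arguments h1 {m N}. Arguments h2 {m N}.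
Arguments CRK {m N}. Arguments kappa {m N}.

Definition is_translation m (N : crn m) (T : translation N) : Prop :=
  is_crn (tN T) /\
  [/\
      bijective (h1 T),
      (forall i (j : 'I_m), (cplx (tN T) (tgt (tN T) (h1 T i)) j)%:Z
                            - (cplx (tN T) (src (tN T) (h1 T i)) j)%:Z
                          = (cplx N (tgt N i) j)%:Z - (cplx N (src N i) j)%:Z),
      (* (2) h2 on reactant complexes, compatible with h1 (surjectivity onto
         the tilde reactant set follows from bijectivity of h1) *)
      (forall i, h2 T (src N i) = src (tN T) (h1 T i)),
      (CRK T \subset reactants N) /\
      (forall j, j \in reactants (tN T) ->
         #|[set c in CRK T | h2 T c == j]| = 1%N) &
      (forall j, kappa T j \in CRK T) /\
      (forall j, j \in reactants (tN T) -> h2 T (kappa T j) = j)].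

Definition improper m (N : crn m) (T : translation N) : Prop :=
  exists c1 c2, [/\ c1 \in reactants N, c2 \in reactants N, c1 != c2 & h2 T c1 = h2 T c2].

Definition strong m (N : crn m) (T : translation N) : Prop := weakly_reversible (tN T).

Definition RI m (N : crn m) (T : translation N) : {set 'I_(n_rx N)} :=
  [set i | src N i \notin CRK T].
Definition srcK m (N : crn m) (T : translation N) (i : 'I_(n_rx N)) : 'I_(n_cx N) :=
  kappa T (h2 T (src N i)).

Section Real.
Variable R : realType.

Definition yvec m (N : crn m) (a : 'I_(n_cx N)) : 'rV[R]_m := \row_j (cplx N a j)%:R.

Arguments yvec {m} N a.

(* kinetic-order subspace (rows spanning S~) *)
Definition kin_mx m (N : crn m) (T : translation N) : 'M[R]_(n_rx (tN T), m) :=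
  \matrix_(l, j) ((cplx N (kappa T (tgt (tN T) l)) j)%:R - (cplx N (kappa T (src (tN T) l)) j)%:R).
(* rows spanning S~_I (zero rows for proper reactions) *)
Definition SI_mx m (N : crn m) (T : translation N) : 'M[R]_(n_rx N, m) :=
  \matrix_(i, j) (if i \in RI T then (cplx N (src N i) j)%:R - (cplx N (srcK T i) j)%:R else 0).

(* structural deficiency dim(ker Y~ /\ Im I~_a) *)
Definition Ymx m (G : crn m) : 'M[R]_(m, n_cx G) := \matrix_(j, a) (cplx G a j)%:R.
Definition Iamx m (G : crn m) : 'M[R]_(n_cx G, n_rx G) :=
  \matrix_(a, l) ((a == tgt G l)%:R - (a == src G l)%:R).
Definition struct_deficiency m (N : crn m) (T : translation N) : nat :=
  \rank (kermx (Ymx (tN T))^T :&: (Iamx (tN T))^T)%MS.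

Definition weakly_resolvable m (N : crn m) (T : translation N) : Prop :=
  strong T /\ (SI_mx T <= kin_mx T)%MS.

Definition basis_mx m (N : crn m) s (p q : 'I_s -> 'I_(n_cx N)) : 'M[R]_(s, m) :=
  \matrix_(j0, j) ((cplx N (p j0) j)%:R - (cplx N (q j0) j)%:R).
Definition basis_ok m (N : crn m) (T : translation N) s (p q : 'I_s -> 'I_(n_cx N)) : Prop :=
  [/\ row_free (basis_mx p q), (basis_mx p q == kin_mx T)%MS,
      (forall j, p j \in CRK T /\ q j \in CRK T) &
      (forall j, linked (h2 T (p j)) (h2 T (q j)))].
Definition coords_ok m (N : crn m) (T : translation N) s (p q : 'I_s -> 'I_(n_cx N))
    (c : 'I_(n_rx N) -> 'I_s -> R) : Prop :=
  forall i, i \in RI T ->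
    yvec N (src N i) - yvec N (srcK T i) = \sum_j c i j *: (yvec N (p j) - yvec N (q j)).

Definition treeK m (N : crn m) (T : translation N) (w : 'I_(n_rx N) -> R)
    (a : 'I_(n_cx (tN T))) : R :=
  \sum_(E : {set 'I_(n_rx (tN T))} | is_tree a E) \prod_(i | h1 T i \in E) w i.

Arguments treeK {m N} T w a.

(* weightings of the semi-proper reaction graph: k_i on proper reactions,
   arbitrary positive values (the indeterminates) on improper ones *)
Definition semi_weights m (N : crn m) (T : translation N) (k w : 'I_(n_rx N) -> R) : Prop :=
  forall i, (i \notin RI T -> w i = k i) /\ 0 < w i.

Definition adj m (N : crn m) (T : translation N) s (p q : 'I_s -> 'I_(n_cx N))
    (c : 'I_(n_rx N) -> 'I_s -> R) (w : 'I_(n_rx N) -> R) (i : 'I_(n_rx N)) : R :=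
  \prod_(j < s) powR (treeK T w (h2 T (p j)) / treeK T w (h2 T (q j))) (c i j).

Arguments adj {m N} T {s} p q c w i.
Definition strongly_resolvable m (N : crn m) (T : translation N) (k : 'I_(n_rx N) -> R)
    s (p q : 'I_s -> 'I_(n_cx N)) (c : 'I_(n_rx N) -> 'I_s -> R) : Prop :=
  weakly_resolvable T /\
  forall i, i \in RI T -> forall w1 w2, semi_weights T k w1 -> semi_weights T k w2 ->
    adj T p q c w1 i = adj T p q c w2 i.

Definition monom m (x : 'I_m -> R) (y : 'I_m -> nat) : R := \prod_j x j ^+ y j.

Definition ma_rhs m (N : crn m) (k : 'I_(n_rx N) -> R) (x : 'I_m -> R) : 'rV[R]_m :=
  \sum_i (k i * monom x (cplx N (src N i))) *: (yvec N (tgt N i) - yvec N (src N i)).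

Arguments ma_rhs {m} N k x.

Definition ktil m (N : crn m) (T : translation N) (k : 'I_(n_rx N) -> R)
    s (p q : 'I_s -> 'I_(n_cx N)) (c : 'I_(n_rx N) -> 'I_s -> R) (i : 'I_(n_rx N)) : R :=
  if i \in RI T then adj T p q c k i * k i else k i.
Arguments ktil {m N} T k {s} p q c i.
(* (the adjustment factor does not depend on the indeterminates under strong
   resolvability, so it is evaluated at the weighting w = k) *)

Definition itma_rhs m (N : crn m) (T : translation N) (k : 'I_(n_rx N) -> R)
    s (p q : 'I_s -> 'I_(n_cx N)) (c : 'I_(n_rx N) -> 'I_s -> R) (x : 'I_m -> R) : 'rV[R]_m :=
  \sum_i (ktil T k p q c i * monom x (cplx N (kappa T (src (tN T) (h1 T i))))) *:
     (yvec (tN T) (tgt (tN T) (h1 T i)) - yvec (tN T) (src (tN T) (h1 T i))).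

Arguments itma_rhs {m N} T k {s} p q c x.
End Real.

Arguments yvec {R m} N a.
Arguments ma_rhs {R m} N k x.
Arguments treeK {R m N} T w a.
Arguments adj {R m N} T {s} p q c w i.
Arguments ktil {R m N} T k {s} p q c i.
Arguments itma_rhs {R m N} T k {s} p q c x.

(* Main.v *)
Require Import Defs.
From HB Require Import structures.
From mathcomp Require Import all_boot all_order all_algebra.
From mathcomp Require Import reals exp sequences.
From mathcomp Require Import ring lra.
Set Implicit Arguments. Unset Strict Implicit. Unset Printing Implicit Defensive.
Import Order.TTheory GRing.Theory Num.Theory.
Local Open Scope ring_scope.

Lemma ulink_sym m (G : crn m) : symmetric (ulink G).
Proof.
move=> u v; apply/existsP/existsP => -[l Hl]; exists l; by rewrite orbC.
Qed.

Lemma linked_sym m (G : crn m) (u v : 'I_(n_cx G)) : linked u v = linked v u.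
Proof. rewrite /linked; have := @sym_connect_sym _ (ulink G) (@ulink_sym m G); apply. Qed.

Lemma linked_trans m (G : crn m) (u v w : 'I_(n_cx G)) : linked u v -> linked v w -> linked u w.
Proof. exact: connect_trans. Qed.

Lemma linked_refl m (G : crn m) (u : 'I_(n_cx G)) : linked u u.
Proof. exact: connect0. Qed.

Lemma linked_st m (G : crn m) l : linked (src G l) (tgt G l).
Proof. apply: connect1; apply/existsP; exists l; by rewrite !eqxx. Qed.

Lemma Erel_sub m (G : crn m) (E F : {set 'I_(n_rx G)}) :
  E \subset F -> subrel (Erel E) (Erel F).
Proof.
move=> sEF u v /existsP[l /andP[lE H]]; apply/existsP; exists l.
by rewrite (subsetP sEF _ lE).
Qed.

Lemma connect_Erel_sub m (G : crn m) (E F : {set 'I_(n_rx G)}) (u v : 'I_(n_cx G)) :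
  E \subset F -> connect (Erel E) u v -> connect (Erel F) u v.
Proof.
move=> sEF; apply: connect_sub => x y H; apply: connect1; exact: Erel_sub H.
Qed.

Lemma cut_path m (G : crn m) (E : {set 'I_(n_rx G)}) l x p :
  path (Erel E) x p -> uniq (x :: p) -> last x p = src G l ->
  path (Erel (E :\ l)) x p.
Proof.
elim: p x => [//|y p IH] x /= /andP[exy pp] /andP[xn up] hl.
rewrite IH // andbT.
have xz : x != src G l.
  by rewrite -hl; apply: contraNneq xn => ->; exact: mem_last.
case/existsP: exy => l' /andP[l'E /andP[/eqP sl' tl']].
apply/existsP; exists l'; rewrite !inE l'E sl' tl' !eqxx !andbT.
apply/eqP => E1; move: xz; by rewrite -E1 sl' eqxx.
Qed.

Lemma cut_connect m (G : crn m) (E : {set 'I_(n_rx G)}) l (v : 'I_(n_cx G)) :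
  connect (Erel E) v (src G l) -> connect (Erel (E :\ l)) v (src G l).
Proof.
case/connectP => p pp hl.
rewrite hl; move: hl; case: (shortenP pp) => p' pp' up' _ hl.
apply/connectP; exists p' => //.
by apply: cut_path => //; rewrite hl.
Qed.

Definition Func m (G : crn m) (z : 'I_(n_cx G)) (F : {set 'I_(n_rx G)}) : Prop :=
  (forall l, l \in F -> linked (src G l) z) /\
  (forall v, linked v z -> #|[set l in F | src G l == v]| = 1%N).

Lemma Func_uniq m (G : crn m) z F (l1 l2 : 'I_(n_rx G)) :
  Func z F -> l1 \in F -> l2 \in F -> src G l1 = src G l2 -> l1 = l2.
Proof.
case=> H1 H2 i1 i2 e.
have := H2 (src G l1) (H1 _ i1); move/eqP/cards1P => [l0 Hl0].
have : l1 \in [set l in F | src G l == src G l1] by rewrite inE i1 eqxx.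
have : l2 \in [set l in F | src G l == src G l1] by rewrite inE i2 e eqxx.
by rewrite Hl0 !inE => /eqP -> /eqP ->.
Qed.

Lemma Func_ex m (G : crn m) z F (v : 'I_(n_cx G)) :
  Func z F -> linked v z -> exists2 l, l \in F & src G l = v.
Proof.
case=> H1 H2 lv; have := H2 v lv; move/eqP/cards1P => [l0 Hl0].
have : l0 \in [set l in F | src G l == v] by rewrite Hl0 inE.
by rewrite inE => /andP[? /eqP ?]; exists l0.
Qed.

Lemma Func_congr m (G : crn m) (z z' : 'I_(n_cx G)) F :
  linked z z' -> Func z F -> Func z' F.
Proof.
move=> zz' [H1 H2]; split.
  by move=> l /H1 h; apply: linked_trans h zz'.
move=> v vz'; apply: H2; apply: linked_trans vz' _; by rewrite linked_sym.
Qed.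

Lemma tree_reach m (G : crn m) (z v : 'I_(n_cx G)) (E : {set 'I_(n_rx G)}) :
  is_tree z E -> linked v z -> connect (Erel E) v z.
Proof. by case/and3P => _ _ /forallP /(_ v) /implyP. Qed.

Lemma tree_Func m (G : crn m) (z : 'I_(n_cx G)) (F : {set 'I_(n_rx G)}) l :
  l \in F -> src G l = z -> is_tree z (F :\ l) -> Func z F.
Proof.
move=> lF sl /and3P[/forall_inP T1 /forallP T2 _]; split.
  move=> l' l'F; case: (eqVneq l' l) => [->|ne]; first by rewrite sl linked_refl.
  have : l' \in F :\ l by rewrite !inE ne.
  by move/T1/andP=> [].
move=> v vz; case: (eqVneq v z) => [->|ne].
  apply/eqP/cards1P; exists l; apply/setP => l'; rewrite !inE.
  case: (eqVneq l' l) => [->|ne']; first by rewrite lF sl eqxx.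
  apply/negbTE; apply/negP => /andP[l'F /eqP sl'].
  have : l' \in F :\ l by rewrite !inE ne'.
  by move/T1/andP=> [_]; rewrite sl' eqxx.
have := T2 v; rewrite vz ne /= => /eqP <-; apply: eq_card => l'.
rewrite !inE.
case: (eqVneq l' l) => [->|ne'] /=; last by [].
by rewrite sl eq_sym (negbTE ne) andbF.
Qed.

Lemma Func_tree m (G : crn m) (z : 'I_(n_cx G)) (F : {set 'I_(n_rx G)}) l :
  Func z F -> l \in F -> src G l = z ->
  (forall v, linked v z -> connect (Erel F) v z) -> is_tree z (F :\ l).
Proof.
move=> [H1 H2] lF sl R; apply/and3P; split.
- apply/forall_inP => l'; rewrite !inE => /andP[ne l'F]; rewrite H1 //=.
  apply/eqP => e; move: ne; rewrite (@Func_uniq m G z F l' l) ?eqxx //.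
  by rewrite e sl.
- apply/forallP => v; apply/implyP => /andP[vz ne].
  rewrite -(H2 v vz); apply/eqP; apply: eq_card => l'; rewrite !inE.
  case: (eqVneq l' l) => [->|ne'] /=; last by [].
  by rewrite sl eq_sym (negbTE ne) andbF.
- apply/forallP => v; apply/implyP => vz; rewrite -sl; apply: cut_connect.
  by rewrite sl; apply: R.
Qed.

Lemma last_step (T : finType) (e : rel T) x y :
  connect e x y -> x != y -> exists2 u, connect e x u & e u y.
Proof.
case/connectP => p; elim/last_ind: p => [|p z _] /=.
  by move=> _ ->; rewrite eqxx.
rewrite rcons_path last_rcons => /andP[pp ez] -> _.
by exists (last x p) => //; apply/connectP; exists p.
Qed.

Lemma Erel_linked m (G : crn m) (E : {set 'I_(n_rx G)}) u v :
  Erel E u v -> linked u v.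
Proof. by case/existsP => l /andP[_ /andP[/eqP <- /eqP <-]]; exact: linked_st. Qed.

Definition nxt m (G : crn m) (F : {set 'I_(n_rx G)}) (v : 'I_(n_cx G)) :=
  if [pick l in F | src G l == v] is Some l then tgt G l else v.

Lemma nxtE m (G : crn m) z (F : {set 'I_(n_rx G)}) l :
  Func z F -> l \in F -> nxt F (src G l) = tgt G l.
Proof.
move=> HF lF; rewrite /nxt; case: pickP => [l0 /andP[l0F /eqP sl0]|].
  by rewrite (Func_uniq HF l0F lF sl0).
by move/(_ l); rewrite lF eqxx.
Qed.

Lemma iter_min (T : Type) (f : T -> T) a u1 u2 n1 n2 :
  iter n1 f a = u1 -> iter n2 f a = u2 -> f u1 = a ->
  (forall n, iter n f a = u2 -> (n2 <= n)%N) -> (n1 < n2)%N -> False.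
Proof.
move=> h1 h2 fu1 hmin lt12.
have : iter (n2 - n1.+1) f a = u2.
  by rewrite -h2 -{2}(subnK lt12) iterD /= h1 fu1.
move/hmin; rewrite leqNgt => /negP; apply.
rewrite ltn_subrL; apply/andP; split => //; by apply: leq_ltn_trans lt12.
Qed.

Definition A1 m (G : crn m) (a : 'I_(n_cx G)) (F : {set 'I_(n_rx G)}) :=
  [set l | (l \in F) && (tgt G l == a) && is_tree (src G l) (F :\ l)].
Definition A2 m (G : crn m) (a : 'I_(n_cx G)) (F : {set 'I_(n_rx G)}) :=
  [set l | (l \in F) && (src G l == a) && is_tree a (F :\ l)].

Lemma Func_reach m (G : crn m) z (F : {set 'I_(n_rx G)}) l :
  l \in F -> src G l = z -> is_tree z (F :\ l) ->
  forall v, linked v z -> connect (Erel F) v z.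
Proof.
move=> lF sl T v vz; apply: (@connect_Erel_sub m G (F :\ l)); first exact: subsetDl.
exact: tree_reach.
Qed.

Lemma A2_A1 m (G : crn m) (hst : forall l, src G l != tgt G l) (a : 'I_(n_cx G)) (F : {set 'I_(n_rx G)}) :
  A2 a F != set0 -> A1 a F != set0.
Proof.
case/set0Pn => l; rewrite inE => /andP[/andP[lF /eqP sl] T].
have HF := tree_Func lF sl T.
have R := Func_reach lF sl T.
have lba : linked (tgt G l) a by rewrite linked_sym -sl linked_st.
have nba : tgt G l != a by rewrite -sl eq_sym hst.
case: (last_step (R _ lba) nba) => u bu /existsP[l' /andP[l'F /andP[/eqP sl' /eqP tl']]].
subst u; apply/set0Pn; exists l'; rewrite inE l'F tl' eqxx /=.
have ua : linked (src G l') a by rewrite -tl' linked_st.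
apply: Func_tree => //; first by apply: Func_congr HF; rewrite linked_sym.
move=> v vu; apply: connect_trans (R v _) _.
  by apply: linked_trans vu _.
apply: connect_trans bu; apply: connect1; apply/existsP; exists l.
by rewrite lF sl !eqxx.
Qed.

Lemma A1_A2 m (G : crn m) (a : 'I_(n_cx G)) (F : {set 'I_(n_rx G)}) : A1 a F != set0 -> A2 a F != set0.
Proof.
case/set0Pn => l; rewrite inE => /andP[/andP[lF /eqP tl] T].
have HF := tree_Func lF erefl T.
have R := Func_reach lF erefl T.
have ua : linked (src G l) a by rewrite -tl linked_st.
have HFa := Func_congr ua HF.
case: (Func_ex HFa (linked_refl a)) => l0 l0F sl0.
apply/set0Pn; exists l0; rewrite inE l0F sl0 eqxx /=.
apply: Func_tree => // v va.
apply: connect_trans (R v _) _; first by apply: linked_trans va _; rewrite linked_sym.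
apply: connect1; apply/existsP; exists l; by rewrite lF tl !eqxx.
Qed.

Lemma A2_le1 m (G : crn m) (a : 'I_(n_cx G)) (F : {set 'I_(n_rx G)}) : (#|A2 a F| <= 1)%N.
Proof.
apply/card_le1_eqP => l1 l2; rewrite !inE => /andP[/andP[l1F /eqP s1] /and3P[/forall_inP T1 _ _]].
move=> /andP[/andP[l2F /eqP s2] _].
case: (eqVneq l1 l2) => // ne.
have : l2 \in F :\ l1 by rewrite !inE l2F eq_sym ne.
by move/T1/andP => [_]; rewrite s2 eqxx.
Qed.

Lemma A1_le1 m (G : crn m) (a : 'I_(n_cx G)) (F : {set 'I_(n_rx G)}) : (#|A1 a F| <= 1)%N.
Proof.
apply/card_le1_eqP => l1 l2; rewrite !inE => /andP[/andP[l1F /eqP t1] T1].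
move=> /andP[/andP[l2F /eqP t2] T2].
have HF1 := tree_Func l1F erefl T1.
have R1 := Func_reach l1F erefl T1.
have R2 := Func_reach l2F erefl T2.
have u1a : linked (src G l1) a by rewrite -t1 linked_st.
have u2a : linked (src G l2) a by rewrite -t2 linked_st.
have HF := Func_congr u1a HF1.
have sub : forall x y, connect (Erel F) x y -> fconnect (nxt F) x y.
  apply: connect_sub => x y /existsP[l /andP[lF /andP[/eqP <- /eqP <-]]].
  by apply: connect1; rewrite /= (nxtE HF lF).
have f1 : nxt F (src G l1) = a by rewrite (nxtE HF l1F).
have f2 : nxt F (src G l2) = a by rewrite (nxtE HF l2F).
have c1 : fconnect (nxt F) a (src G l1) by apply: sub; apply: R1; rewrite linked_sym.
have c2 : fconnect (nxt F) a (src G l2) by apply: sub; apply: R2; rewrite linked_sym.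
have ex1 : exists n, iter n (nxt F) a == src G l1 by exists (findex (nxt F) a (src G l1)); rewrite iter_findex.
have ex2 : exists n, iter n (nxt F) a == src G l2 by exists (findex (nxt F) a (src G l2)); rewrite iter_findex.
case: (ex_minnP ex1) => n1 /eqP h1 m1.
case: (ex_minnP ex2) => n2 /eqP h2 m2.
have e12 : n1 = n2.
  case: (ltngtP n1 n2) => // lt; exfalso.
    by apply: (iter_min h1 h2 f1 _ lt) => n hn; apply: m2; rewrite hn.
  by apply: (iter_min h2 h1 f2 _ lt) => n hn; apply: m1; rewrite hn.
apply: esym; apply: (Func_uniq HF l1F l2F); by rewrite -h1 -h2 e12.
Qed.

Lemma A12_card m (G : crn m) (hst : forall l, src G l != tgt G l)
  (a : 'I_(n_cx G)) (F : {set 'I_(n_rx G)}) : #|A1 a F| = #|A2 a F|.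
Proof.
have l1 := A1_le1 a F; have l2 := A2_le1 a F.
have [h|h] := boolP (A2 a F == set0).
  have h' : A1 a F == set0.
    by apply: contraTT h; apply: A1_A2.
  by rewrite (eqP h) (eqP h') !cards0.
have h' := A2_A1 hst h.
rewrite -card_gt0 in h; rewrite -card_gt0 in h'.
apply/eqP; rewrite eqn_leq; apply/andP; split.
  exact: leq_trans l1 h.
exact: leq_trans l2 h'.
Qed.

Definition treeG (R : realType) m (G : crn m) (w : 'I_(n_rx G) -> R) (a : 'I_(n_cx G)) : R :=
  \sum_(E : {set 'I_(n_rx G)} | is_tree a E) \prod_(l in E) w l.

Local Open Scope ring_scope.

Lemma sum_pairs (R : realType) m (G : crn m) (w : 'I_(n_rx G) -> R)
  (Q : 'I_(n_rx G) -> {set 'I_(n_rx G)} -> bool) :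
  (forall l E, Q l E -> l \notin E) ->
  \sum_l \sum_(E | Q l E) w l * \prod_(l' in E) w l' =
  \sum_(F : {set 'I_(n_rx G)}) (\prod_(l' in F) w l') *+ #|[set l | (l \in F) && Q l (F :\ l)]|.
Proof.
move=> HQ.
transitivity (\sum_l \sum_(F : {set 'I_(n_rx G)}) (if (l \in F) && Q l (F :\ l) then \prod_(l' in F) w l' else 0)).
  apply: eq_bigr => l _; rewrite -big_mkcond /=.
  rewrite (reindex_onto (fun F => F :\ l) (fun E => l |: E)) /=; last first.
    by move=> E /HQ lE; rewrite setU1K.
  apply: eq_big => F.
    case lF: (l \in F) => /=.
      by rewrite setD1K // eqxx andbT.
    case: (Q l (F :\ l)) => //=; apply/negbTE; apply/eqP => e.
    by move: lF; rewrite -e setU11.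
  move=> /andP[_ /eqP e]; rewrite -{2}e big_setU1 //=; by rewrite !inE eqxx.
apply: etrans; first exact: exchange_big.
apply: eq_bigr => F _.
rewrite -big_mkcond /=.
have -> : \sum_(l | (l \in F) && Q l (F :\ l)) \prod_(l' in F) w l' =
          \sum_(l in [set l | (l \in F) && Q l (F :\ l)]) \prod_(l' in F) w l'.
  by apply: eq_bigl => l; rewrite inE.
by rewrite sumr_const.
Qed.

Lemma tree_root_notin m (G : crn m) (z : 'I_(n_cx G)) E l :
  is_tree z E -> src G l = z -> l \notin E.
Proof.
case/and3P => /forall_inP T1 _ _ sl; apply/negP => /T1/andP[_].
by rewrite sl eqxx.
Qed.

Lemma tree_balance (R : realType) m (G : crn m) (hst : forall l, src G l != tgt G l)
  (w : 'I_(n_rx G) -> R) (a : 'I_(n_cx G)) :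
  \sum_(l | tgt G l == a) w l * treeG w (src G l) =
  treeG w a * \sum_(l | src G l == a) w l.
Proof.
transitivity (\sum_l \sum_(E | (tgt G l == a) && is_tree (src G l) E) w l * \prod_(l' in E) w l').
  rewrite big_mkcond /=; apply: eq_bigr => l _.
  case: eqP => _ /=; last by rewrite big_pred0.
  by rewrite /treeG big_distrr.
rewrite (@sum_pairs R m G w (fun l E => (tgt G l == a) && is_tree (src G l) E)); last first.
  by move=> l E /andP[_ T]; apply: tree_root_notin T _.
rewrite mulrC big_distrl /=.
transitivity (\sum_l \sum_(E | (src G l == a) && is_tree a E) w l * \prod_(l' in E) w l'); last first.
  rewrite [RHS]big_mkcond /=; apply: eq_bigr => l _.
  case: eqP => _ /=; last by rewrite big_pred0.
  by rewrite /treeG big_distrr.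
rewrite (@sum_pairs R m G w (fun l E => (src G l == a) && is_tree a E)); last first.
  by move=> l E /andP[/eqP s T]; apply: tree_root_notin T s.
apply: eq_bigr => F _; congr (_ *+ _).
have -> : #|[set l | (l \in F) && ((tgt G l == a) && is_tree (src G l) (F :\ l))]| = #|A1 a F|.
  by apply: eq_card => l; rewrite !inE andbA.
have -> : #|[set l | (l \in F) && ((src G l == a) && is_tree a (F :\ l))]| = #|A2 a F|.
  by apply: eq_card => l; rewrite !inE andbA.
exact: A12_card.
Qed.

Lemma wr_linked m (G : crn m) (u v : 'I_(n_cx G)) :
  weakly_reversible G -> linked u v -> connect (dlink G) u v.
Proof.
move=> wr; apply: connect_sub => x y /existsP[l /orP[]] /andP[/eqP <- /eqP <-].
  by apply: connect1; apply/existsP; exists l; rewrite !eqxx.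
exact: wr.
Qed.

Lemma crossing (T : finType) (e : rel T) (S : pred T) x y :
  connect e x y -> ~~ S x -> S y -> exists u v, [/\ e u v, ~~ S u & S v].
Proof.
case/connectP => p; elim: p x => [|z p IH] x /=; first by move=> _ -> /negbTE ->.
case/andP => exz pz ly nx Sy.
case Sz: (S z); first by exists x, z.
by apply: (IH z pz ly) => //; rewrite Sz.
Qed.

Lemma tree_exists m (G : crn m) (a : 'I_(n_cx G)) :
  weakly_reversible G -> exists E, is_tree a E.
Proof.
move=> wr.
pose cls := [set v | linked v a].
suff H : forall n (S : {set 'I_(n_cx G)}) (E : {set 'I_(n_rx G)}),
  a \in S -> (forall v, v \in S -> linked v a) ->
  (forall l, l \in E -> (src G l \in S) && (src G l != a)) ->
  (forall v, v \in S -> v != a -> #|[set l in E | src G l == v]| = 1%N) ->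
  (forall v, v \in S -> connect (Erel E) v a) ->
  #|cls :\: S| = n -> exists E, is_tree a E.
  apply: (H _ [set a] set0) => //.
  - by rewrite inE.
  - by move=> v; rewrite inE => /eqP ->; apply: linked_refl.
  - by move=> l; rewrite inE.
  - by move=> v; rewrite inE => ->.
  - by move=> v; rewrite inE => /eqP ->; apply: connect0.
elim=> [|n IH] S E aS Sl El Ec Er hc.
  have sub : forall v, linked v a -> v \in S.
    move=> v va; apply: contraT => vS.
    have : v \in cls :\: S by rewrite !inE vS va.
    by rewrite (cards0_eq hc) inE.
  exists E; apply/and3P; split.
  - apply/forall_inP => l /El /andP[sS ->]; by rewrite Sl.
  - apply/forallP => v; apply/implyP => /andP[va ne]; by rewrite Ec // sub.
  - apply/forallP => v; apply/implyP => va; by rewrite Er // sub.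
have : (0 < #|cls :\: S|)%N by rewrite hc.
rewrite card_gt0 => /set0Pn[v0]; rewrite !inE => /andP[v0S v0a].
case: (crossing (S := mem S) (wr_linked wr v0a) v0S aS) => u [v] [/existsP[l /andP[/eqP su /eqP tv]] uS vS].
subst u v.
have {uS} uS : src G l \notin S by [].
have {vS} vS : tgt G l \in S by [].
have ua : linked (src G l) a by apply: linked_trans (linked_st l) (Sl _ vS).
have una : src G l != a by apply: contraNneq uS => ->.
apply: (IH (src G l |: S) (l |: E)).
- by rewrite inE aS orbT.
- by move=> v; rewrite !inE => /orP[/eqP ->|/Sl].
- move=> l'; rewrite !inE => /orP[/eqP ->|/El/andP[h ->]]; first by rewrite eqxx una.
  by rewrite h orbT.
- move=> v; rewrite !inE => /orP[/eqP ->|vS'] ne.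
    apply/eqP/cards1P; exists l; apply/setP => l'; rewrite !inE.
    case: (eqVneq l' l) => [->|ne'] /=; first by rewrite eqxx.
    apply/negbTE/negP => /andP[l'E /eqP sl'].
    by move: (El _ l'E); rewrite sl' (negbTE uS).
  rewrite -(Ec v vS' ne); apply: eq_card => l'; rewrite !inE.
  case: (eqVneq l' l) => [->|ne'] /=; last by [].
  rewrite andbC; case: eqP => // e; by move: uS; rewrite e vS'.
- have sub : E \subset l |: E by apply/subsetP => x xE; rewrite inE xE orbT.
  move=> v; rewrite !inE => /orP[/eqP ->|vS'].
    apply: connect_trans (connect_Erel_sub sub (Er _ vS)).
    by apply: connect1; apply/existsP; exists l; rewrite !inE !eqxx.
  exact: connect_Erel_sub sub (Er _ vS').
- have -> : cls :\: (src G l |: S) = (cls :\: S) :\ src G l.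
    by apply/setP => x; rewrite !inE negb_or andbA [X in X && _]andbC.
  have : src G l \in cls :\: S by rewrite !inE uS ua.
  move=> uin; move: hc; rewrite (cardsD1 (src G l)) uin; by case.
Qed.

Lemma exmax (R : realType) (I : finType) (P : pred I) (f : I -> R) i0 :
  P i0 -> exists2 i, P i & forall j, P j -> f j <= f i.
Proof.
move=> P0; case: (@arg_maxP _ _ I i0 P f P0) => i Pi H; by exists i.
Qed.

Lemma connect_back (T : finType) (e : rel T) (P : pred T) x y :
  (forall u v, e u v -> P v -> P u) -> connect e x y -> P y -> P x.
Proof.
move=> H /connectP[p]; elim: p x => [|z p IH] x /=; first by move=> _ ->.
by case/andP => exz pz ly Py; apply: H exz _; apply: IH.
Qed.

Lemma treeG_gt0 (R : realType) m (G : crn m) (w : 'I_(n_rx G) -> R) a :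
  (forall l, 0 < w l) -> weakly_reversible G -> 0 < treeG w a.
Proof.
move=> wp wr; case: (tree_exists a wr) => E0 T0.
rewrite /treeG (bigD1 E0) //=; apply: ltr_pwDl.
  by apply: prodr_gt0 => l _.
by apply: sumr_ge0 => E _; apply: prodr_ge0 => l _; apply: ltW.
Qed.

Lemma max_principle (R : realType) m (G : crn m) (hst : forall l, src G l != tgt G l)
  (w : 'I_(n_rx G) -> R) (Psi : 'I_(n_cx G) -> R) :
  weakly_reversible G -> (forall l, 0 < w l) -> (forall v, 0 < Psi v) ->
  (forall a, \sum_(l | tgt G l == a) w l * Psi (src G l) = Psi a * \sum_(l | src G l == a) w l) ->
  forall a b, linked a b -> treeG w a * Psi b = treeG w b * Psi a.
Proof.
move=> wr wp Pp bal a0 b0 ab.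
pose r v := treeG w v / Psi v.
have KE v : treeG w v = r v * Psi v by rewrite /r divfK // gt_eqF.
have key : forall a, (forall v, linked v a -> r v <= r a) ->
    forall l, tgt G l == a -> r (src G l) = r a.
  move=> a amax.
  have S0 : \sum_(l | tgt G l == a) w l * Psi (src G l) * (r a - r (src G l)) = 0.
    transitivity (r a * \sum_(l | tgt G l == a) w l * Psi (src G l) -
                  \sum_(l | tgt G l == a) w l * treeG w (src G l)).
      rewrite mulr_sumr -sumrB; apply: eq_bigr => l _.
      by rewrite KE; ring.
    by rewrite tree_balance // bal KE; ring.
  have H := psumr_eq0P _ S0.
  have {H} H : forall l, tgt G l == a -> w l * Psi (src G l) * (r a - r (src G l)) = 0.
    apply: H => l /eqP tl; apply: mulr_ge0; first by apply: mulr_ge0; apply: ltW.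
    rewrite subr_ge0; apply: amax; rewrite -tl; exact: linked_st.
  move=> l tl; have := H l tl; move/eqP; rewrite mulf_eq0 mulf_eq0 subr_eq0.
  by rewrite (gt_eqF (wp l)) (gt_eqF (Pp _)) /= => /eqP.
case: (@exmax R _ (fun v => linked v a0) r a0 (linked_refl a0)) => am amL amH.
have amL' v : linked v am = linked v a0.
  apply/idP/idP => h; first exact: linked_trans h amL.
  by apply: linked_trans h _; rewrite linked_sym.
have allmax : forall v, linked v a0 -> r v = r am.
  move=> v va.
  pose P := fun x => linked x a0 && (r x == r am).
  have : P v.
    apply: (@connect_back _ (dlink G) P v am) (wr_linked wr _) _; last first.
    - by rewrite /P amL eqxx.
    - by rewrite amL'.
    move=> u x /existsP[l /andP[/eqP su /eqP tx]] /andP[xa /eqP rx].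
    have xmax : forall y, linked y x -> r y <= r x.
      move=> y yx; rewrite rx; apply: amH; exact: linked_trans yx xa.
    have ru : r u = r x by rewrite -su; apply: (key x xmax l); rewrite tx.
    rewrite /P ru rx eqxx andbT; apply: linked_trans _ xa.
    by rewrite -su -tx linked_st.
  by case/andP => _ /eqP.
have b0a : linked b0 a0 by rewrite linked_sym.
rewrite !KE (allmax a0 (linked_refl a0)) (allmax b0 b0a); ring.
Qed.


Lemma monom_gt0 (R : realType) m (x : 'I_m -> R) y :
  (forall j, 0 < x j) -> 0 < monom x y.
Proof. by move=> xp; apply: prodr_gt0 => j _; apply: exprn_gt0. Qed.

Definition Lg (R : realType) m (x : 'I_m -> R) (y : 'I_m -> nat) : R :=
  \sum_s (y s)%:R * ln (x s).

Lemma monomE (R : realType) m (x : 'I_m -> R) y :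
  (forall j, 0 < x j) -> monom x y = expR (Lg x y).
Proof.
move=> xp; rewrite /Lg expR_sum /monom; apply: eq_bigr => s _.
by rewrite expRM_natl lnK // posrE.
Qed.

Lemma Lg_row (R : realType) m (x : 'I_m -> R) y :
  Lg x y = \sum_s (\row_j ((y j)%:R : R)) 0 s * ln (x s).
Proof. by apply: eq_bigr => s _; rewrite mxE. Qed.

Lemma sum_ind (R : realType) (I : finType) (t : I) (f : I -> R) :
  \sum_a (a == t)%:R * f a = f t.
Proof.
rewrite (bigD1 t) //= eqxx mul1r big1 ?addr0 // => a /negbTE ->; by rewrite mul0r.
Qed.

Lemma sum_ind3 (R : realType) (I : finType) (T' : eqType) (t : I -> T') (a : T') (f : I -> R) :
  \sum_l f l * (a == t l)%:R = \sum_(l | t l == a) f l.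
Proof.
rewrite [RHS]big_mkcond; apply: eq_bigr => l _; rewrite eq_sym.
by case: (t l == a); rewrite ?mulr1 ?mulr0.
Qed.

Theorem lemma4p3 (R : realType) (m : nat) (N : crn m) (T : translation N)
    (k : 'I_(n_rx N) -> R) (s : nat) (p q : 'I_s -> 'I_(n_cx N))
    (c : 'I_(n_rx N) -> 'I_s -> R) :
  is_crn N ->
  (forall i, 0 < k i) ->
  is_translation T ->
  improper T ->
  basis_ok R T p q ->
  coords_ok T p q c ->
  strongly_resolvable T k p q c ->
  struct_deficiency R T = 0%N ->
  forall x : 'I_m -> R, (forall j, 0 < x j) ->
    (ma_rhs N k x = 0 <-> itma_rhs T k p q c x = 0).
Proof.
move=> crnN kp trT _ bok cok sres def0 x xp.
case: trT => crnG [bh1 vec h2s [CRKsub CRKc] [kapC kapH]].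
have hst : forall l, src (tN T) l != tgt (tN T) l by case: crnG.
have wr : weakly_reversible (tN T) by case: sres => [[]].
case: bh1 => g h1K gK.
have kapp : forall cc, cc \in CRK T -> kappa T (h2 T cc) = cc.
  move=> cc ccK.
  have hr : h2 T cc \in reactants (tN T).
    move: (subsetP CRKsub _ ccK); case/imsetP => i _ ->; by rewrite h2s; apply: imset_f.
  have := CRKc _ hr; move/eqP/cards1P => [c0 Hc0].
  have e1 : cc \in [set c' in CRK T | h2 T c' == h2 T cc] by rewrite inE ccK eqxx.
  have e2 : kappa T (h2 T cc) \in [set c' in CRK T | h2 T c' == h2 T cc].
    by rewrite inE kapC kapH // eqxx.
  by move: e1 e2; rewrite Hc0 !inE => /eqP -> /eqP ->.
have srcK_nRI : forall i, i \notin RI T -> srcK T i = src N i.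
  by move=> i; rewrite inE negbK => h; apply: kapp.
have srcKE : forall i, srcK T i = kappa T (src (tN T) (h1 T i)) by move=> i; rewrite /srcK h2s.
have vecR : forall i, yvec (tN T) (tgt (tN T) (h1 T i)) - yvec (tN T) (src (tN T) (h1 T i)) =
    yvec N (tgt N i) - yvec N (src N i) :> 'rV[R]_m.
  move=> i; apply/rowP => j; rewrite !mxE.
  by have := congr1 (fun z : int => z%:~R : R) (vec i j); rewrite /= !intrB.
pose Psi b := monom x (cplx N (kappa T b)).
have Psip : forall b, 0 < Psi b by move=> b; apply: monom_gt0.
pose rhsT (W : 'I_(n_rx N) -> R) := \sum_i (W i * monom x (cplx N (srcK T i))) *:
   (yvec N (tgt N i) - yvec N (src N i)).
pose ratio i := monom x (cplx N (src N i)) / monom x (cplx N (srcK T i)).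
have ratio1 : forall i, i \notin RI T -> ratio i = 1.
  by move=> i h; rewrite /ratio srcK_nRI // divff // gt_eqF // monom_gt0.
have maE : ma_rhs N k x = rhsT (fun i => k i * ratio i).
  rewrite /ma_rhs /rhsT; apply: eq_bigr => i _; congr (_ *: _).
  by rewrite /ratio -mulrA divfK // gt_eqF // monom_gt0.
have itE : itma_rhs T k p q c x = rhsT (ktil T k p q c).
  rewrite /itma_rhs /rhsT; apply: eq_bigr => i _; by rewrite vecR srcKE.
have rhsT_t : forall W, rhsT W = \sum_l (W (g l) * Psi (src (tN T) l)) *:
    (yvec (tN T) (tgt (tN T) l) - yvec (tN T) (src (tN T) l)).
  move=> W; rewrite /rhsT [RHS](reindex (h1 T)) /=; last by apply: onW_bij; exists g.
  apply: eq_big => // i _. by rewrite h1K vecR srcKE.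
have treeK_eq : forall (W : 'I_(n_rx N) -> R) (a : 'I_(n_cx (tN T))), treeK T W a = treeG (fun l => W (g l)) a.
  move=> W a; rewrite /treeK /treeG; apply: eq_big => // E _.
  rewrite [RHS](reindex (h1 T)) /=; last by apply: onW_bij; exists g.
  by apply: eq_big => // i _; rewrite h1K.
have key : forall W : 'I_(n_rx N) -> R, semi_weights T k W -> rhsT W = 0 ->
    forall i, i \in RI T -> adj T p q c W i = ratio i.
  move=> W sw e0 i iRI.
  pose om l := W (g l).
  have omp : forall l, 0 < om l by move=> l; case: (sw (g l)).
  pose v := \row_l (om l * Psi (src (tN T) l)) : 'rV[R]_(n_rx (tN T)).
  pose z := v *m (Iamx R (tN T))^T.
  have zY : z *m (Ymx R (tN T))^T = 0.
    apply/rowP => j; rewrite -mulmxA !mxE.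
    transitivity ((rhsT W) 0 j); last by rewrite e0 mxE.
    rewrite rhsT_t summxE; apply: eq_bigr => l _; rewrite !mxE; congr (_ * _).
    under eq_bigr do rewrite !mxE.
    rewrite (eq_bigr (fun a => (a == tgt (tN T) l)%:R * ((cplx (tN T) a j)%:R : R) -
                               (a == src (tN T) l)%:R * (cplx (tN T) a j)%:R)); last first.
      by move=> a _; rewrite mulrBl.
    by rewrite sumrB !sum_ind.
  have z0 : z = 0.
    have zsub : (z <= kermx (Ymx R (tN T))^T :&: (Iamx R (tN T))^T)%MS.
      by rewrite sub_capmx submxMl andbT; apply/sub_kermxP.
    move: def0; rewrite /struct_deficiency => /eqP; rewrite mxrank_eq0 => /eqP h.
    apply/eqP; rewrite -submx0; apply: submx_trans zsub _; by rewrite h submx0.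
  have bal : forall a, \sum_(l | tgt (tN T) l == a) om l * Psi (src (tN T) l) =
                      Psi a * \sum_(l | src (tN T) l == a) om l.
    move=> a; have := congr1 (fun M : 'rV[R]_(n_cx (tN T)) => M 0 a) z0.
    rewrite !mxE.
    under eq_bigr do rewrite !mxE mulrBr.
    rewrite sumrB !sum_ind3 => /eqP; rewrite subr_eq0 => /eqP ->.
    rewrite mulr_sumr; apply: eq_bigr => l /eqP <-; by rewrite mulrC.
  have MP := max_principle hst wr omp Psip bal.
  have Kp : forall a, 0 < treeG om a by move=> a; apply: treeG_gt0.
  case: bok => _ _ bC bL.
  rewrite /adj.
  transitivity (\prod_j expR (c i j * (Lg x (cplx N (p j)) - Lg x (cplx N (q j))))).
    apply: eq_bigr => j _; rewrite !treeK_eq -/om.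
    have e := MP _ _ (bL j).
    have -> : treeG om (h2 T (p j)) / treeG om (h2 T (q j)) = Psi (h2 T (p j)) / Psi (h2 T (q j)).
      apply/eqP; rewrite eqr_div ?(gt_eqF (Kp _)) ?(gt_eqF (Psip _)) //.
      by rewrite e mulrC.
    rewrite /Psi !kapp; try by case: (bC j).
    by rewrite !monomE // -expRB -expRM mulrC.
  rewrite -expR_sum /ratio !monomE // -expRB; congr expR.
  have H := congr1 (fun v : 'rV[R]_m => \sum_s v 0 s * ln (x s)) (cok i iRI).
  move: H => /=.
  have -> : \sum_s0 (yvec N (src N i) - yvec N (srcK T i)) 0 s0 * ln (x s0) =
            Lg x (cplx N (src N i)) - Lg x (cplx N (srcK T i)).
    rewrite /Lg -sumrB; apply: eq_bigr => s0 _; by rewrite !mxE mulrBl.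
  move=> ->.
  transitivity (\sum_s0 \sum_j c i j * (((cplx N (p j) s0)%:R - (cplx N (q j) s0)%:R) * ln (x s0))).
    apply: etrans; last by apply: esym; exact: exchange_big.
    apply: eq_bigr => j _; rewrite /Lg -sumrB mulr_sumr; apply: eq_bigr => s0 _; ring.
  apply: eq_bigr => s0 _; rewrite summxE mulr_suml; apply: eq_bigr => j _; rewrite !mxE; ring.
have ksw : semi_weights T k k by move=> i; split.
have final : (forall i, i \in RI T -> adj T p q c k i = ratio i) ->
    itma_rhs T k p q c x = ma_rhs N k x.
  move=> H; rewrite itE maE /rhsT; apply: eq_bigr => i _; congr (_ *: _).
  rewrite /ktil; case: ifP => h; first by rewrite H //; congr (_ * _); exact: mulrC.
  by rewrite ratio1 ?h // mulr1.
case: sres => _ sr.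
split => e0.
- pose W i := k i * ratio i.
  have Wsw : semi_weights T k W.
    move=> i; split; first by move=> h; rewrite /W ratio1 // mulr1.
    by rewrite /W mulr_gt0 // divr_gt0 // monom_gt0.
  have kr : forall i, i \in RI T -> adj T p q c k i = ratio i.
    move=> i h; rewrite (sr i h k W ksw Wsw); apply: key => //; by rewrite -maE.
  by rewrite final.
- have adjp : forall i, 0 < adj T p q c k i.
    move=> i; rewrite /adj; apply: prodr_gt0 => j _; apply: powR_gt0.
    by rewrite !treeK_eq divr_gt0 // treeG_gt0.
  have Ksw : semi_weights T k (ktil T k p q c).
    move=> i; rewrite /ktil; case: ifP => h; last by split.
    by split; [| rewrite mulr_gt0].
  have kr : forall i, i \in RI T -> adj T p q c k i = ratio i.
    move=> i h; rewrite (sr i h k _ ksw Ksw); apply: key => //; by rewrite -itE.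
  by rewrite -final.
Qed.
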